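(* Let $\epsilon=\epsilon_1\cdots\epsilon_n$ be the reversal of an inversion sequence (equivalently, an integer sequence with $0\le\epsilon_i\le n-i$ for all $i$), and let $\epsilon'$ be the sequence obtained by applying Algorithm A (described below) to $\epsilon$. Then $\epsilon'$ is also the reversal of an inversion sequence.
   Context: An inversion sequence of length $n$ is an integer sequence $\epsilon_1\cdots\epsilon_n$ with $0\le\epsilon_i<i$ for all $i$; its reversal is $\epsilon_n\cdots\epsilon_1$. The reduction of an integer word replaces each occurrence of its $k$-th smallest distinct value by $k-1$; a consecutive pattern $\underline{p_1p_2p_3p_4}$ occurs in a sequence at position $i$ if the reduction of its entries in positions $i,\dots,i+3$ equals $p_1p_2p_3p_4$. Let $p=\underline{0102}$ and $q=\underline{0112}$. Algorithm A, on input an integer sequence $\mathrm{seq}=\epsilon_1\cdots\epsilon_n$: let $E_p$, $E_q$ be the sets of positions of occurrences of $p$, resp. $q$, in the input sequence; set $\mathrm{last}:=$ null. For $i=1,2,\dots,n$ in order: let $N_p,N_q$ be the sets of positions of occurrences of $p$, resp. $q$, in the current sequence. If $i-2\in E_p$: set $\mathrm{last}:=\mathrm{seq}[i]$ and $\mathrm{seq}[i]:=\mathrm{seq}[i-1]$. Else if $i-2\in E_q$: set $\mathrm{last}:=\mathrm{seq}[i]$ and $\mathrm{seq}[i]:=\mathrm{seq}[i-2]$. Else if $i-2\in N_p$ or $i-2\in N_q$: swap the values of $\mathrm{seq}[i]$ and $\mathrm{last}$. Output $\mathrm{seq}$. *)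

(* Defs.v *)
From mathcomp Require Import all_boot.
Set Implicit Arguments. Unset Strict Implicit. Unset Printing Implicit Defensive.

(* Sequences are lists of nats; positions are 1-based as in the paper:
   entry at position i of s is  nth 0 s (i-1). *)
Definition ent (s : seq nat) (i : nat) : nat := nth 0 s i.-1.

Definition reduce (w : seq nat) : seq nat :=
  let vals := sort leq (undup w) in [seq index x vals | x <- w].

Definition occurs (p s : seq nat) (i : nat) : bool :=
  [&& 1 <= i, i + 3 <= size s &
      reduce [:: ent s i; ent s i.+1; ent s i.+2; ent s i.+3] == p].

Definition pat_p : seq nat := [:: 0; 1; 0; 2].
Definition pat_q : seq nat := [:: 0; 1; 1; 2].

Definition setent (s : seq nat) (i x : nat) : seq nat := set_nth 0 s i.-1 x.

(* One step of Algorithm A at index i; orig is the input sequence,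
   state = (current sequence, last). *)
Definition algA_step (orig : seq nat) (st : seq nat * nat) (i : nat)
  : seq nat * nat :=
  let: (s, last) := st in
  if occurs pat_p orig (i - 2) then (setent s i (ent s i.-1), ent s i)
  else if occurs pat_q orig (i - 2) then (setent s i (ent s (i - 2)), ent s i)
  else if occurs pat_p s (i - 2) || occurs pat_q s (i - 2)
       then (setent s i last, ent s i)
  else (s, last).

Definition algA (s : seq nat) : seq nat :=
  (foldl (algA_step s) (s, 0) (iota 1 (size s))).1.

Definition rev_inv_seq (s : seq nat) : bool :=
  all (fun i => ent s i <= size s - i) (iota 1 (size s)).

(* Main.v *)
Require Import Defs.
From mathcomp Require Import all_boot.
From mathcomp Require Import zify.

Lemma red_lt (w : seq nat) x y :
  x \in w -> y \in w ->
  index x (sort leq (undup w)) < index y (sort leq (undup w)) -> x < y.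
Proof.
move=> xw yw hi.
have xv : x \in sort leq (undup w) by rewrite mem_sort mem_undup.
have yv : y \in sort leq (undup w) by rewrite mem_sort mem_undup.
have hle : x <= y.
  have := @sorted_ltn_index _ leq leq_trans _ (sort_sorted leq_total _) _ _ xv yv hi; exact.
rewrite ltn_neqAle hle andbT; apply/eqP => exy; subst y.
by rewrite ltnn in hi.
Qed.

Lemma occ_lt s i :
  occurs pat_p s i || occurs pat_q s i ->
  [/\ 1 <= i, i + 3 <= size s, ent s i < ent s i.+3,
      ent s i.+1 < ent s i.+3 & ent s i.+2 < ent s i.+3].
Proof.
move=> /orP H.
have [h1 h2 hr] : [/\ 1 <= i, i + 3 <= size s &
   (reduce [:: ent s i; ent s i.+1; ent s i.+2; ent s i.+3] == pat_p) ||
   (reduce [:: ent s i; ent s i.+1; ent s i.+2; ent s i.+3] == pat_q)].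
  by case: H => /and3P [-> -> ->]; rewrite ?orbT.
split => //; move: hr; rewrite /reduce;
set V := sort _ _; rewrite [map _ _]/=;
(have m1 : ent s i \in [:: ent s i; ent s i.+1; ent s i.+2; ent s i.+3] by rewrite !inE eqxx ?orbT);
(have m2 : ent s i.+1 \in [:: ent s i; ent s i.+1; ent s i.+2; ent s i.+3] by rewrite !inE eqxx ?orbT);
(have m3 : ent s i.+2 \in [:: ent s i; ent s i.+1; ent s i.+2; ent s i.+3] by rewrite !inE eqxx ?orbT);
(have m4 : ent s i.+3 \in [:: ent s i; ent s i.+1; ent s i.+2; ent s i.+3] by rewrite !inE eqxx ?orbT);
move=> /orP [] /eqP [e1 e2 e3 e4];
apply: (@red_lt [:: ent s i; ent s i.+1; ent s i.+2; ent s i.+3]) => //; rewrite -/V ?e1 ?e2 ?e3 ?e4 //.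
Qed.

Lemma ent_set s i j x : 0 < i -> 0 < j ->
  ent (setent s i x) j = if j == i then x else ent s j.
Proof.
move=> hi hj; rewrite /ent /setent nth_set_nth /=.
have -> : (j.-1 == i.-1) = (j == i).
  by apply/eqP/eqP => [|->] //; lia.
by [].
Qed.

Lemma occurs_ext p s o i : size s = size o ->
  (forall j, i <= j -> ent s j = ent o j) -> occurs p s i = occurs p o i.
Proof.
move=> hs he; rewrite /occurs hs !he //; lia.
Qed.

Definition Inv (o : seq nat) (k : nat) (st : seq nat * nat) : Prop :=
  let: (s, l) := st in
  [/\ size s = size o,
     forall j, k < j -> ent s j = ent o j,
     forall j, 0 < j -> ent s j = ent o j \/ ent s j < ent o j.+1 &
     l = 0 \/ exists m, [/\ m <= k, l < ent s m.+1 &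
                          forall j, m < j -> ent s j = ent o j]].

Lemma inv_mod o k s l v : Inv o k (s, l) -> k < size o ->
  v < ent o k.+2 -> ent o k.+1 < ent o k.+2 ->
  Inv o k.+1 (setent s k.+1 v, ent s k.+1).
Proof.
move=> [hs he hm hl] hk hv ho; split.
- by rewrite /setent size_set_nth /= hs; apply/maxn_idPr.
- move=> j hj; rewrite ent_set //; last lia.
  have -> : (j == k.+1) = false by apply/eqP; lia.
  apply: he; lia.
- move=> j hj; rewrite ent_set //; case: eqP => [->|_]; [by right| exact: hm].
- right; exists k.+1; split => //.
  + rewrite ent_set // he // he //.
    by have -> : (k.+2 == k.+1) = false by apply/eqP; lia.
  + move=> j hj; rewrite ent_set //; last lia.
    have -> : (j == k.+1) = false by apply/eqP; lia.
    apply: he; lia.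
Qed.

Lemma occ_lt2 s k :
  occurs pat_p s (k.+1 - 2) || occurs pat_q s (k.+1 - 2) ->
  [/\ 2 <= k, k.+2 <= size s, ent s k.-1 < ent s k.+2,
      ent s k < ent s k.+2 & ent s k.+1 < ent s k.+2].
Proof.
move=> /(occ_lt _ _) [h1 h2 a1 a2 a3].
have e1 : k.+1 - 2 = k.-1 by lia.
have e2 : (k.+1 - 2).+1 = k by lia.
have e3 : (k.+1 - 2).+2 = k.+1 by lia.
have e4 : (k.+1 - 2).+3 = k.+2 by lia.
rewrite e4 in a1 a2 a3; rewrite e3 in a3; rewrite e2 in a2; rewrite e1 in a1.
split => //; lia.
Qed.

Arguments inv_mod {o k s l v}.

Arguments occ_lt2 {s k}.

Lemma inv_step o k st : Inv o k st -> k < size o ->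
  Inv o k.+1 (algA_step o st k.+1).
Proof.
case: st => s l Hinv hk.
have Hinv' := Hinv; move: Hinv' => [hs he hm hl].
have weak : Inv o k.+1 (s, l).
  split => //.
  - move=> j hj; apply: he; lia.
  - case: hl => [->|[m [hm1 hm2 hm3]]]; [by left|right; exists m; split => //; lia].
rewrite /algA_step.
have ep : k.+1.-1 = k by [].
rewrite ep.
case: ifP => hP.
  have [h1 h2 a1 a2 a3] := occ_lt2 (introT orP (or_introl hP)).
  apply: (inv_mod Hinv); try lia.
  move: (hm k (ltac:(lia))) => [->|?]; lia.
case: ifP => hQ.
  have [h1 h2 a1 a2 a3] := occ_lt2 (introT orP (or_intror hQ)).
  have ek : k.+1 - 2 = k.-1 by lia.
  apply: (inv_mod Hinv); try lia.
  rewrite ek; move: (hm k.-1 (ltac:(lia))) => [->|]; try lia.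
  have -> : k.-1.+1 = k by lia.
  lia.
case: ifP => hN; last exact: weak.
have [h1 h2 a1 a2 a3] := occ_lt2 hN.
rewrite he // in a3; rewrite he // in a3 a2 a1.
apply: (inv_mod Hinv); try lia.
case: hl => [->|[m [hm1 hm2 hm3]]]; first lia.
case: (ltnP m k.-1) => hmk.
  have hs2 : forall j, k.+1 - 2 <= j -> ent s j = ent o j.
    move=> j hj; apply: hm3; lia.
  by move: hN; rewrite !(occurs_ext _ _ _ _ hs hs2) hP hQ.
have [em|em] : m = k \/ m = k.-1 by lia.
all: rewrite em in hm2.
  by rewrite he // in hm2; lia.
have e : k.-1.+1 = k by lia.
rewrite e in hm2; lia.
Qed.

Lemma inv_all o k : k <= size o ->
  Inv o k (foldl (algA_step o) (o, 0) (iota 1 k)).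
Proof.
elim: k => [_|k IH hk].
  split => //; [by move=> j _; left | by left].
rewrite -addn1 iotaD foldl_cat /= add1n addn1.
case: (foldl _ _ _) (IH (ltnW hk)) => s l Hi.
exact: inv_step.
Qed.

Theorem corollary2 (e : seq nat) :
  rev_inv_seq e -> rev_inv_seq (algA e).
Proof.
move=> /allP H.
rewrite /algA.
case E : (foldl _ _ _) (inv_all e _ (leqnn (size e))) => [s l] [hs he hm hl] /=.
apply/allP => i; rewrite hs mem_iota => /andP [h1 h2].
have Hi : ent e i <= size e - i by apply: H; rewrite mem_iota h1 h2.
case: (hm i h1) => [->//|hlt].
case: (ltnP i.+1 (size e).+1) => hi.
  have : ent e i.+1 <= size e - i.+1 by apply: H; rewrite mem_iota; lia.
  lia.
have : ent e i.+1 = 0 by rewrite /ent nth_default //; lia.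
lia.
Qed.
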